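(* Let $F$ and $B$ be finite simplicial sets, let $G$ be a simplicial group acting simplicially on $F$ from the left, and let $\tau\colon B_q\to G_{q-1}$ ($q>0$) be a twisting function, so that $E(\tau)=F\times_\tau B$ is a twisted Cartesian product. Let $R\to A$ be a map of commutative rings. Equip the simplicial commutative $R$-algebra $\mathcal{L}^R_F(A)$ with the left action of $G$ by $R$-algebra isomorphisms given in degree $n$ by $g\cdot\bigl(\bigotimes_{f\in F_n}a_f\bigr)=\bigotimes_{f\in F_n}a_{g^{-1}f}$ for $g\in G_n$. Then there is an isomorphism of simplicial commutative $R$-algebras \[\mathcal{L}^R_{E(\tau)}(A)\cong \mathcal{L}^R_B\bigl(\mathcal{L}^R_F(A)^\tau\bigr),\] induced in each simplicial degree $n$ by the identification $\bigotimes_{(f,b)\in F_n\times B_n}A\cong\bigotimes_{b\in B_n}\bigotimes_{f\in F_n}A$.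
   Context: All tensor products are over $R$. For a finite simplicial set $X$ and a commutative $R$-algebra $A$, the (unpointed) Loday construction $\mathcal{L}^R_X(A)$ is the simplicial commutative $R$-algebra with $n$-simplices $\bigotimes_{x\in X_n}A$; the face map $d_i$ sends $\bigotimes_x a_x$ to $\bigotimes_{y\in X_{n-1}}\prod_{x: d_ix=y}a_x$ and the degeneracy $s_i$ sends it to $\bigotimes_{z\in X_{n+1}}\prod_{x:s_ix=z}a_x$ (empty products are $1$). A twisting function (Moore/May) for a simplicial group $G$ and simplicial set $B$ is a family of functions $\tau\colon B_q\to G_{q-1}$, $q>0$, with $d_0\tau(b)=[\tau(d_0b)]^{-1}\tau(d_1b)$ for $q>1$; $\tau(d_{i+1}b)=d_i\tau(b)$ for $i\ge1$, $q>1$; $\tau(s_{i+1}b)=s_i\tau(b)$ for $i\ge 0$; and $\tau(s_0b)=e$. If $G$ acts simplicially on $F$ from the left, the twisted Cartesian product $E(\tau)=F\times_\tau B$ is the simplicial set with $E(\tau)_n=F_n\times B_n$, $d_0(f,b)=(\tau(b)\cdot d_0f,d_0b)$, $d_i(f,b)=(d_if,d_ib)$ for $i>0$, $s_i(f,b)=(s_if,s_ib)$. If $C$ is a simplicial commutative $R$-algebra on which $G$ acts simplicially with each $G_q$ acting on $C_q$ by $R$-algebra isomorphisms, the twisted Loday construction $\mathcal{L}^R_B(C^\tau)$ is the simplicial commutative $R$-algebra with $n$-simplices $\bigotimes_{b\in B_n}C_n$ and structure maps on monomials: $d_0(\bigotimes_b f_b)=\bigotimes_{c\in B_{n-1}}\prod_{b:d_0b=c}\tau(b)(d_0f_b)$;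 $d_i(\bigotimes_b f_b)=\bigotimes_{c\in B_{n-1}}\prod_{b:d_ib=c}d_if_b$ for $1\le i\le n$; $s_i(\bigotimes_b f_b)=\bigotimes_{e\in B_{n+1}}\prod_{b:s_ib=e}s_if_b$. *)

(* Defs.v *)
From HB Require Import structures.
From mathcomp Require Import all_boot all_order all_algebra.
Unset Printing Implicit Defensive.
Import GRing.Theory.
Local Open Scope ring_scope.

(* fc n i : X (n+1) -> X n  (d_i, 0 <= i <= n+1) and degeneracies       *)
(* dg n i : X n -> X (n+1)  (s_i, 0 <= i <= n).  Indices out of range   *)
(* are never used.                                                     *)
Definition simplicial_ids {X : nat -> Type}
  (fc : forall n, nat -> X n.+1 -> X n) (dg : forall n, nat -> X n -> X n.+1) : Prop :=
  [/\ (forall n i j (x : X n.+2), (i < j <= n.+2)%N ->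
          fc n i (fc n.+1 j x) = fc n j.-1 (fc n.+1 i x)),
      (forall n i j (x : X n.+1), (i < j <= n.+1)%N ->
          fc n.+1 i (dg n.+1 j x) = dg n j.-1 (fc n i x)),
      (forall n j (x : X n), (j <= n)%N ->
          fc n j (dg n j x) = x /\ fc n j.+1 (dg n j x) = x),
      (forall n i j (x : X n.+1), (j.+1 < i <= n.+2)%N ->
          fc n.+1 i (dg n.+1 j x) = dg n j (fc n i.-1 x)) &
      (forall n i j (x : X n), (i <= j <= n)%N ->
          dg n.+1 i (dg n j x) = dg n.+1 j.+1 (dg n i x))].

Record sSet := SSet {
  sob : nat -> finType;
  sfc : forall n, nat -> sob n.+1 -> sob n;
  sdg : forall n, nat -> sob n -> sob n.+1;
  s_ids : simplicial_ids sfc sdg }.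
Arguments sob : clear implicits.
Arguments sfc : clear implicits.
Arguments sdg : clear implicits.

(* finite simplicial set: finitely many non-degenerate simplices
   (levelwise finite, and every simplex above some dimension is degenerate) *)
Definition finite_sSet (X : sSet) : Prop :=
  exists N : nat, forall n (x : sob X n.+1), (N <= n)%N ->
    exists i (y : sob X n), (i <= n)%N /\ x = sdg X n i y.

Record sGroup := SGroup {
  gob : nat -> Type;
  gmul : forall n, gob n -> gob n -> gob n;
  gone : forall n, gob n;
  ginv : forall n, gob n -> gob n;
  gmulA : forall n x y z, gmul n (gmul n x y) z = gmul n x (gmul n y z);
  gmul1 : forall n x, gmul n (gone n) x = x;
  gmulV : forall n x, gmul n (ginv n x) x = gone n;
  gfc : forall n, nat -> gob n.+1 -> gob n;
  gdg : forall n, nat -> gob n -> gob n.+1;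
  g_ids : simplicial_ids gfc gdg;
  gfc_mul : forall n i x y, gfc n i (gmul n.+1 x y) = gmul n (gfc n i x) (gfc n i y);
  gdg_mul : forall n i x y, gdg n i (gmul n x y) = gmul n.+1 (gdg n i x) (gdg n i y) }.
Arguments gob : clear implicits.
Arguments gmul : clear implicits.
Arguments gone : clear implicits.
Arguments ginv : clear implicits.
Arguments gfc : clear implicits.
Arguments gdg : clear implicits.

Definition sAction (G : sGroup) (F : sSet)
  (act : forall n, gob G n -> sob F n -> sob F n) : Prop :=
  [/\ (forall n x, act n (gone G n) x = x),
      (forall n g h x, act n (gmul G n g h) x = act n g (act n h x)),
      (forall n i g x, (i <= n.+1)%N ->
          sfc F n i (act n.+1 g x) = act n (gfc G n i g) (sfc F n i x)) &
      (forall n i g x, (i <= n)%N ->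
          sdg F n i (act n g x) = act n.+1 (gdg G n i g) (sdg F n i x))].

(* Twisting function tau : B_(q+1) -> G_q  (Moore/May). *)
Definition twisting (G : sGroup) (B : sSet) (tau : forall q, sob B q.+1 -> gob G q) : Prop :=
  [/\ (forall q (b : sob B q.+2),
          gfc G q 0 (tau q.+1 b)
          = gmul G q (ginv G q (tau q (sfc B q.+1 0 b))) (tau q (sfc B q.+1 1 b))),
      (forall q i (b : sob B q.+2), (1 <= i <= q.+1)%N ->
          tau q (sfc B q.+1 i.+1 b) = gfc G q i (tau q.+1 b)),
      (forall q i (b : sob B q.+1), (i <= q)%N ->
          tau q.+1 (sdg B q.+1 i.+1 b) = gdg G q i (tau q b)) &
      (forall q (b : sob B q), tau q (sdg B q 0 b) = gone G q)].

Section TCP.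
Variables (G : sGroup) (F B : sSet) (act : forall n, gob G n -> sob F n -> sob F n)
  (tau : forall q, sob B q.+1 -> gob G q).
Definition tcp_ob (n : nat) : finType := (sob F n * sob B n)%type.
Definition tcp_fc n (i : nat) (p : tcp_ob n.+1) : tcp_ob n :=
  if i == 0%N then (act n (tau n p.2) (sfc F n 0 p.1), sfc B n 0 p.2)
  else (sfc F n i p.1, sfc B n i p.2).
Definition tcp_dg n (i : nat) (p : tcp_ob n) : tcp_ob n.+1 :=
  (sdg F n i p.1, sdg B n i p.2).
End TCP.

Definition alg_hom {R : comPzRingType} {U V : comAlgType R} (f : U -> V) : Prop :=
  [/\ (forall x y, f (x + y) = f x + f y),
      (forall (r : R) x, f (r *: x) = r *: f x),
      f 1 = 1 &
      (forall x y, f (x * y) = f x * f y)].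

(* Tensor powers  tp C X = (x)_{x in X} C  (tensor over R) of commutative
   R-algebras indexed by finite sets, given by the universal property of
   the coproduct of commutative R-algebras:  tp_in x c is the element with
   c in the factor x and 1 elsewhere, and tp_lift f is the algebra map
   (x)_x c_x |-> prod_x f x c_x. *)
Record tensorStr (R : comPzRingType) := TensorStr {
  tp : comAlgType R -> finType -> comAlgType R;
  tp_in : forall (C : comAlgType R) (X : finType), X -> C -> tp C X;
  tp_in_hom : forall (C : comAlgType R) (X : finType) (x : X), alg_hom (tp_in C X x);
  tp_lift : forall (C : comAlgType R) (X : finType) (S : comAlgType R),
      (X -> C -> S) -> tp C X -> S;
  tp_lift_hom : forall (C : comAlgType R) (X : finType) (S : comAlgType R) (f : X -> C -> S),
      (forall x, alg_hom (f x)) -> alg_hom (tp_lift C X S f);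
  tp_lift_in : forall (C : comAlgType R) (X : finType) (S : comAlgType R) (f : X -> C -> S),
      (forall x, alg_hom (f x)) -> forall x c, tp_lift C X S f (tp_in C X x c) = f x c;
  tp_lift_uniq : forall (C : comAlgType R) (X : finType) (S : comAlgType R) (h1 h2 : tp C X -> S),
      alg_hom h1 -> alg_hom h2 ->
      (forall x c, h1 (tp_in C X x c) = h2 (tp_in C X x c)) -> h1 =1 h2 }.
Arguments tp {R} t C X : rename.
Arguments tp_in {R} t C X _ _ : rename.
Arguments tp_lift {R} t {C X S} _ _ : rename.
Arguments tp_in_hom {R} t C X _ : rename.

Section Loday.
Variables (R : comPzRingType) (T : tensorStr R).

(* map induced by a map of finite sets phi : X -> Y:
   (x)_x c_x |-> (x)_y prod_{x : phi x = y} c_x *)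
Definition tmap (C : comAlgType R) {X Y : finType} (phi : X -> Y) :
    tp T C X -> tp T C Y :=
  tp_lift T (fun x c => tp_in T C Y (phi x) c).

Definition loday_ob (A : comAlgType R) (X : nat -> finType) n := tp T A (X n).
Definition loday_fc (A : comAlgType R) (X : nat -> finType)
  (fc : forall n, nat -> X n.+1 -> X n) n i : loday_ob A X n.+1 -> loday_ob A X n :=
  tmap A (fc n i).
Definition loday_dg (A : comAlgType R) (X : nat -> finType)
  (dg : forall n, nat -> X n -> X n.+1) n i : loday_ob A X n -> loday_ob A X n.+1 :=
  tmap A (dg n i).

Variables (G : sGroup) (B : sSet) (tau : forall q, sob B q.+1 -> gob G q)
  (C : nat -> comAlgType R)
  (cfc : forall n, nat -> C n.+1 -> C n) (cdg : forall n, nat -> C n -> C n.+1)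
  (cact : forall n, gob G n -> C n -> C n).

Definition tw_ob n := tp T (C n) (sob B n).
Definition tw_fc n (i : nat) : tw_ob n.+1 -> tw_ob n :=
  tp_lift T (fun (b : sob B n.+1) (c : C n.+1) =>
    tp_in T (C n) (sob B n) (sfc B n i b)
      (if i == 0%N then cact n (tau n b) (cfc n 0 c) else cfc n i c)).
Definition tw_dg n (i : nat) : tw_ob n -> tw_ob n.+1 :=
  tp_lift T (fun (b : sob B n) (c : C n) =>
    tp_in T (C n.+1) (sob B n.+1) (sdg B n i b) (cdg n i c)).
End Loday.
Arguments tmap {R} T C {X Y} phi _.
Arguments loday_ob {R} T A X n.
Arguments loday_fc {R} T A {X} fc n i _.
Arguments loday_dg {R} T A {X} dg n i _.
Arguments tw_ob {R} T B C n.
Arguments tw_fc {R} T {G B} tau {C} cfc cact n i _.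
Arguments tw_dg {R} T {B C} cdg n i _.

(* The simplicial R-algebra L_F(A) with the left G-action
   g . ((x)_f a_f) = (x)_f a_{g^{-1} f}, i.e. the algebra map a at f |-> a at g f. *)
Definition lodayF_act (R : comPzRingType) (T : tensorStr R) (A : comAlgType R)
  (G : sGroup) (F : sSet) (act : forall n, gob G n -> sob F n -> sob F n)
  n (g : gob G n) : loday_ob T A (sob F) n -> loday_ob T A (sob F) n :=
  tmap T A (act n g).
Arguments lodayF_act {R} T A G F act n g _.

(* Main.v *)
Require Import Defs.
From HB Require Import structures.
From mathcomp Require Import all_boot all_order all_algebra.
Import GRing.Theory.
Local Open Scope ring_scope.

Lemma hom_comp (R : comPzRingType) (U V W : comAlgType R) (f : U -> V) (g : V -> W) :
  alg_hom f -> alg_hom g -> alg_hom (fun x => g (f x)).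
Proof.
case=> fD fZ f1 fM [gD gZ g1 gM]; split.
- by move=> x y; rewrite fD gD.
- by move=> r x; rewrite fZ gZ.
- by rewrite f1 g1.
- by move=> x y; rewrite fM gM.
Qed.

Lemma hom_id (R : comPzRingType) (U : comAlgType R) : alg_hom (fun x : U => x).
Proof. by split. Qed.

Lemma tmap_hom (R : comPzRingType) (T : tensorStr R) (C : comAlgType R) (X Y : finType)
  (phi : X -> Y) : alg_hom (tmap T C phi).
Proof. by apply: tp_lift_hom => x; apply: tp_in_hom. Qed.

Arguments hom_comp {R U V W f g}.
Arguments hom_id {R U}.
Arguments tmap_hom {R T C X Y phi}.

Lemma tmap_in (R : comPzRingType) (T : tensorStr R) (C : comAlgType R) (X Y : finType)
  (phi : X -> Y) x c : tmap T C phi (tp_in T C X x c) = tp_in T C Y (phi x) c.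
Proof. by rewrite /tmap tp_lift_in // => y; apply: tp_in_hom. Qed.

Theorem proposition2p5 (R : comPzRingType) (T : tensorStr R) (A : comAlgType R)
  (F B : sSet) (G : sGroup) (act : forall n, gob G n -> sob F n -> sob F n)
  (tau : forall q, sob B q.+1 -> gob G q) :
  finite_sSet F -> finite_sSet B -> sAction G F act -> twisting G B tau ->
  let E := tcp_ob F B in
  let LE_fc := loday_fc T A (tcp_fc G F B act tau) in
  let LE_dg := loday_dg T A (tcp_dg F B) in
  let C := loday_ob T A (sob F) in
  let TW_fc := tw_fc T tau (loday_fc T A (sfc F)) (lodayF_act T A G F act) in
  let TW_dg := tw_dg T (B := B) (loday_dg T A (sdg F)) in
  exists phi : forall n, loday_ob T A E n -> tw_ob T B C n,
    [/\ (forall n, alg_hom (phi n) /\ bijective (phi n)),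
        (forall n (f : sob F n) (b : sob B n) (a : A),
           phi n (tp_in T A (E n) (f, b) a)
           = tp_in T (C n) (sob B n) b (tp_in T A (sob F n) f a)),
        (forall n i x, (i <= n.+1)%N -> phi n (LE_fc n i x) = TW_fc n i (phi n.+1 x)) &
        (forall n i x, (i <= n)%N -> phi n.+1 (LE_dg n i x) = TW_dg n i (phi n x))].
Proof.
move=> _ _ _ _; cbv zeta.
pose g n (p : tcp_ob F B n) (a : A) := tp_in T (loday_ob T A (sob F) n) (sob B n) p.2 (tp_in T A (sob F n) p.1 a).
have ghom : forall n p, alg_hom (g n p).
  by move=> n p; exact: (hom_comp (tp_in_hom T A (sob F n) p.1) (tp_in_hom T (loday_ob T A (sob F) n) (sob B n) p.2)).
pose phi n : loday_ob T A (tcp_ob F B) n -> tw_ob T B (loday_ob T A (sob F)) n := tp_lift T (g n).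
have phihom : forall n, alg_hom (phi n) by move=> n; exact: (tp_lift_hom _ _ _ _ _ _ (ghom n)).
have phiin : forall n f b a, phi n (tp_in T A (tcp_ob F B n) (f, b) a)
           = tp_in T (loday_ob T A (sob F) n) (sob B n) b (tp_in T A (sob F n) f a).
  by move=> n f b a; rewrite /phi tp_lift_in.
pose k n (b : sob B n) (c : loday_ob T A (sob F) n) : loday_ob T A (tcp_ob F B) n :=
  tp_lift T (fun (f : sob F n) (a : A) => tp_in T A (tcp_ob F B n) (f, b) a) c.
have khom : forall n b, alg_hom (k n b).
  by move=> n b; apply: tp_lift_hom => f; apply: tp_in_hom.
pose psi n : tw_ob T B (loday_ob T A (sob F)) n -> loday_ob T A (tcp_ob F B) n := tp_lift T (k n).
have psihom : forall n, alg_hom (psi n) by move=> n; exact: (tp_lift_hom _ _ _ _ _ _ (khom n)).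
exists phi; split => //.
- move=> n; split => //; exists (psi n).
  + move=> x; apply: (tp_lift_uniq _ _ _ _ _ _ _ (hom_comp (phihom n) (psihom n)) hom_id).
    case=> f b a /=; rewrite phiin /psi tp_lift_in // /k tp_lift_in //.
    by move=> f'; apply: tp_in_hom.
  + move=> y; apply: (tp_lift_uniq _ _ _ _ _ _ _ (hom_comp (psihom n) (phihom n)) hom_id).
    move=> b c /=; rewrite /psi tp_lift_in //.
    apply: (tp_lift_uniq _ _ _ _ _ _ _ (hom_comp (khom n b) (phihom n)) (tp_in_hom _ _ _ _)).
    move=> f a /=; rewrite /k tp_lift_in ?phiin //.
    by move=> f'; apply: tp_in_hom.
- move=> n i x _.
  have Hfc : forall b : sob B n.+1, alg_hom (fun c : loday_ob T A (sob F) n.+1 =>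
      tp_in T (loday_ob T A (sob F) n) (sob B n) (sfc B n i b)
        (if i == 0%N then lodayF_act T A G F act n (tau n b) (loday_fc T A (sfc F) n 0 c)
         else loday_fc T A (sfc F) n i c)).
    move=> b; apply: hom_comp; last by apply: tp_in_hom.
    case: (i == 0%N); last by apply: tmap_hom.
    exact: (hom_comp (tmap_hom) (tmap_hom)).
  have TWhom : alg_hom (tw_fc T tau (loday_fc T A (sfc F)) (lodayF_act T A G F act) n i) by apply: tp_lift_hom.
  apply: (tp_lift_uniq _ _ _ _ _ _ _ (hom_comp (tmap_hom) (phihom n))
                       (hom_comp (phihom n.+1) TWhom)).
  case=> f b a /=; rewrite /loday_fc tmap_in phiin /tw_fc tp_lift_in //.
  rewrite /tcp_fc; case: eqP => [->|_] /=.
    by rewrite /lodayF_act !tmap_in phiin.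
  by rewrite tmap_in phiin.
- move=> n i x _.
  have Hdg : forall b : sob B n, alg_hom (fun c : loday_ob T A (sob F) n =>
      tp_in T (loday_ob T A (sob F) n.+1) (sob B n.+1) (sdg B n i b) (loday_dg T A (sdg F) n i c)).
    by move=> b; apply: hom_comp; [apply: tmap_hom | apply: tp_in_hom].
  have TWhom : alg_hom (tw_dg T (B := B) (loday_dg T A (sdg F)) n i) by apply: tp_lift_hom.
  apply: (tp_lift_uniq _ _ _ _ _ _ _ (hom_comp (tmap_hom) (phihom n.+1))
                       (hom_comp (phihom n) TWhom)).
  case=> f b a /=; rewrite /loday_dg tmap_in phiin /tw_dg tp_lift_in //.
  by rewrite /tcp_dg /= tmap_in phiin.
Qed.
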